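(* Let $S$ be a right ample semigroup embedded as a unary semigroup into an inverse semigroup $Q$ (so $a^*=a^{-1}a$ for all $a\in S$). Then for all $a,b,c,x\in S$: (i) $a\leq_{\mathcal{L}^Q}b$ if and only if $a^*=a^*b^*$, if and only if $a\leq_{\mathcal{L}^*}b$; (ii) $L_a\wedge L_b=L_c$ if and only if $c^*=a^*b^*$; (iii) $L_a\wedge L_b=L_{xa}$ if and only if $ab^*=x^*a$. Here $L_a$ denotes the $\mathcal{L}$-class of $a$ in $Q$ and $\wedge$ the meet in the semilattice $Q/\mathcal{L}$.
   Context: $a^{-1}$ is the unique inverse in $Q$; $a\leq_{\mathcal{L}^Q}b$ iff $Q^1a\subseteq Q^1b$, and $Q/\mathcal{L}$ is ordered accordingly (it is a meet semilattice). On $S$: $a\leq_{\mathcal{L}^*}b$ iff for all $x,y\in S^1$, $bx=by$ implies $ax=ay$; $a\,\mathcal{L}^*\,b$ iff $a\leq_{\mathcal{L}^*}b$ and $b\leq_{\mathcal{L}^*}a$. $S$ is right adequate if its idempotents commute and every $a$ is $\mathcal{L}^*$-related to a (unique) idempotent $a^*$; right ample if moreover $b^*a=a(ba)^*$ for all $a,b\in S$. *)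

(* Defs.v *)
Definition inverse_semigroup {Q : Type} (mul : Q -> Q -> Q) (inv : Q -> Q) : Prop :=
  (forall a b c, mul (mul a b) c = mul a (mul b c)) /\
  (forall a, mul (mul a (inv a)) a = a) /\
  (forall a, mul (mul (inv a) a) (inv a) = inv a) /\
  (forall e f, mul e e = e -> mul f f = f -> mul e f = mul f e).

(* Multiplication by an element of Q^1 (None = adjoined identity). *)
Definition lmul1 {Q : Type} (mul : Q -> Q -> Q) (x : option Q) (a : Q) : Q :=
  match x with None => a | Some q => mul q a end.
Definition rmul1 {Q : Type} (mul : Q -> Q -> Q) (a : Q) (x : option Q) : Q :=
  match x with None => a | Some q => mul a q end.

Definition leLQ {Q : Type} (mul : Q -> Q -> Q) (a b : Q) : Prop :=
  forall y, (exists x : option Q, y = lmul1 mul x a) ->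
            (exists x : option Q, y = lmul1 mul x b).

(* L_a ∧ L_b = L_c in the meet semilattice Q/L (c is a greatest lower bound). *)
Definition L_meet_is {Q : Type} (mul : Q -> Q -> Q) (a b c : Q) : Prop :=
  leLQ mul c a /\ leLQ mul c b /\
  (forall d, leLQ mul d a -> leLQ mul d b -> leLQ mul d c).

Definition inS1 {Q : Type} (S : Q -> Prop) (x : option Q) : Prop :=
  match x with None => True | Some q => S q end.

Definition leLstar {Q : Type} (mul : Q -> Q -> Q) (S : Q -> Prop) (a b : Q) : Prop :=
  forall x y, inS1 S x -> inS1 S y ->
    rmul1 mul b x = rmul1 mul b y -> rmul1 mul a x = rmul1 mul a y.

Definition Lstar {Q : Type} (mul : Q -> Q -> Q) (S : Q -> Prop) (a b : Q) : Prop :=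
  leLstar mul S a b /\ leLstar mul S b a.

Definition subsemigroup {Q : Type} (mul : Q -> Q -> Q) (S : Q -> Prop) : Prop :=
  forall a b, S a -> S b -> S (mul a b).

Definition right_adequate {Q : Type} (mul : Q -> Q -> Q) (S : Q -> Prop)
    (star : Q -> Q) : Prop :=
  (forall e f, S e -> S f -> mul e e = e -> mul f f = f -> mul e f = mul f e) /\
  (forall a, S a ->
     S (star a) /\ mul (star a) (star a) = star a /\ Lstar mul S a (star a) /\
     (forall e, S e -> mul e e = e -> Lstar mul S a e -> e = star a)).

Definition right_ample {Q : Type} (mul : Q -> Q -> Q) (S : Q -> Prop)
    (star : Q -> Q) : Prop :=
  right_adequate mul S star /\
  (forall a b, S a -> S b -> mul (star b) a = mul a (star (mul b a))).

(* Main.v *)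
Require Import Defs.
From Stdlib Require Import Setoid.


Lemma xstar {Q} (mul : Q -> Q -> Q) inv
  (HA : forall a b c, mul (mul a b) c = mul a (mul b c))
  (HR : forall a, mul (mul a (inv a)) a = a) a :
  mul a (mul (inv a) a) = a.
Proof. rewrite <- HA. apply HR. Qed.

Lemma star_idem {Q} (mul : Q -> Q -> Q) inv
  (HA : forall a b c, mul (mul a b) c = mul a (mul b c))
  (HR2 : forall a, mul (mul (inv a) a) (inv a) = inv a) a :
  mul (mul (inv a) a) (mul (inv a) a) = mul (inv a) a.
Proof. rewrite <- HA. rewrite HR2. reflexivity. Qed.

Lemma leLQ_iff {Q} (mul : Q -> Q -> Q) inv
  (HA : forall a b c, mul (mul a b) c = mul a (mul b c))
  (HR : forall a, mul (mul a (inv a)) a = a) u v :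
  leLQ mul u v <-> u = mul u (mul (inv v) v).
Proof.
  split.
  - intro H. destruct (H u (ex_intro _ None eq_refl)) as [[q|] Hq]; simpl in Hq.
    + rewrite Hq. rewrite HA. rewrite (xstar mul inv HA HR). reflexivity.
    + subst. symmetry. apply (xstar mul inv HA HR).
  - intros H y [[q|] Hy]; simpl in Hy.
    + exists (Some (mul q (mul u (inv v)))). simpl. rewrite Hy. rewrite !HA.
      rewrite <- H. reflexivity.
    + exists (Some (mul u (inv v))). simpl. rewrite Hy. rewrite HA. exact H.
Qed.

Lemma star_le {Q} (mul : Q -> Q -> Q) inv
  (HA : forall a b c, mul (mul a b) c = mul a (mul b c))
  (HR : forall a, mul (mul a (inv a)) a = a) u v :
  u = mul u (mul (inv v) v) <-> mul (inv u) u = mul (mul (inv u) u) (mul (inv v) v).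
Proof.
  split; intro H.
  - rewrite HA. rewrite <- H. reflexivity.
  - transitivity (mul u (mul (inv u) u)); [symmetry; apply (xstar mul inv HA HR)|].
    rewrite H. rewrite <- HA. rewrite (xstar mul inv HA HR). reflexivity.
Qed.

Lemma rmul1_mul {Q} (mul : Q -> Q -> Q)
  (HA : forall a b c, mul (mul a b) c = mul a (mul b c)) p q o :
  rmul1 mul (mul p q) o = mul p (rmul1 mul q o).
Proof. destruct o; simpl; [apply HA | reflexivity]. Qed.

Lemma leLstar_trans {Q} (mul : Q -> Q -> Q) S a b c :
  leLstar mul S a b -> leLstar mul S b c -> leLstar mul S a c.
Proof. intros H1 H2 x y Hx Hy E. apply H1; auto. Qed.

Theorem lemma4p7 (Q : Type) (mul : Q -> Q -> Q) (inv : Q -> Q)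
  (HQ : inverse_semigroup mul inv)
  (S : Q -> Prop) (HS : subsemigroup mul S)
  (Hamp : right_ample mul S (fun a => mul (inv a) a)) :
  let star := fun a => mul (inv a) a in
  forall a b c x, S a -> S b -> S c -> S x ->
    ((leLQ mul a b <-> star a = mul (star a) (star b)) /\
     (star a = mul (star a) (star b) <-> leLstar mul S a b)) /\
    (L_meet_is mul a b c <-> star c = mul (star a) (star b)) /\
    (L_meet_is mul a b (mul x a) <-> mul a (star b) = mul (star x) a).
Proof.
  destruct HQ as [HA [HR [HR2 HC]]].
  destruct Hamp as [[_ Had] Hamp2].
  intros star a b c x Sa Sb Sc Sx. subst star. cbv beta.
  assert (LQ : forall u v, leLQ mul u v <-> mul (inv u) u = mul (mul (inv u) u) (mul (inv v) v)).
  { intros u v. rewrite (leLQ_iff mul inv HA HR). apply (star_le mul inv HA HR). }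
  assert (SI := star_idem mul inv HA HR2).
  assert (XS := xstar mul inv HA HR).
  assert (E1 : forall a b, mul (mul (mul (inv a) a) (mul (inv b) b)) (mul (inv a) a)
                 = mul (mul (inv a) a) (mul (inv b) b)).
  { intros p q. rewrite (HC (mul (inv p) p) (mul (inv q) q)) by apply SI.
    rewrite HA, SI. reflexivity. }
  assert (E2 : forall a b, mul (mul (mul (inv a) a) (mul (inv b) b)) (mul (inv b) b)
                 = mul (mul (inv a) a) (mul (inv b) b)).
  { intros p q. rewrite HA, SI. reflexivity. }
  assert (EI : forall a b, mul (mul (mul (inv a) a) (mul (inv b) b))
                 (mul (mul (inv a) a) (mul (inv b) b))
                 = mul (mul (inv a) a) (mul (inv b) b)).
  { intros p q. rewrite <- HA. rewrite E1. apply E2. }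
  assert (MEET : forall a b c, L_meet_is mul a b c <->
             mul (inv c) c = mul (mul (inv a) a) (mul (inv b) b)).
  { clear a b c x Sa Sb Sc Sx. intros a b c. unfold L_meet_is. split.
    - intros [H1 [H2 H3]].
      set (e := mul (mul (inv a) a) (mul (inv b) b)).
      assert (He : leLQ mul e c).
      { apply H3; apply (leLQ_iff mul inv HA HR); symmetry; [apply E1 | apply E2]. }
      apply (leLQ_iff mul inv HA HR) in He.
      apply LQ in H1. apply LQ in H2.
      assert (Hc : mul (inv c) c = mul (mul (inv c) c) e).
      { unfold e. rewrite <- HA. rewrite <- H1. exact H2. }
      rewrite Hc. rewrite <- (HC e (mul (inv c) c)) by (unfold e; auto).
      symmetry. exact He.
    - intro H. split; [|split].
      + apply LQ. rewrite H. symmetry. apply E1.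
      + apply LQ. rewrite H. symmetry. apply E2.
      + intros d Hd1 Hd2. apply (leLQ_iff mul inv HA HR) in Hd1.
        apply (leLQ_iff mul inv HA HR) in Hd2. apply (leLQ_iff mul inv HA HR).
        rewrite H. rewrite <- HA. rewrite <- Hd1. exact Hd2. }
  split; [split|split].
  - apply LQ.
  - destruct (Had a Sa) as [Ssa [_ [[La1 La2] _]]].
    destruct (Had b Sb) as [Ssb [_ [[Lb1 Lb2] _]]].
    split.
    + intros H xo yo Sxo Syo E. apply La1; auto.
      rewrite H. rewrite !(rmul1_mul mul HA (mul (inv a) a)). f_equal. apply Lb2; auto.
    + intro H. assert (T := leLstar_trans _ _ _ _ _ La2 (leLstar_trans _ _ _ _ _ H Lb1)).
      specialize (T (Some (mul (inv b) b)) None Ssb I). simpl in T.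
      symmetry. apply T. apply SI.
  - apply MEET.
  - rewrite MEET. rewrite (Hamp2 a x Sa Sx). split.
    + intro H. rewrite H. rewrite <- (HA a (mul (inv a) a)), XS. reflexivity.
    + intro H.
      assert (K : mul (mul (inv (mul x a)) (mul x a)) (mul (inv a) a)
                  = mul (inv (mul x a)) (mul x a)).
      { rewrite !HA. rewrite XS. reflexivity. }
      rewrite (HA (inv a) a). rewrite H. rewrite <- (HA (inv a) a).
      rewrite (HC (mul (inv a) a)) by apply SI. symmetry. exact K.
Qed.
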